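(* Consider the formal power series in $q$ \[ K(q) = \frac{2 J_{20}^{15} J_{6,20} J_{10,20}}{J_{1,20}^2 J_{2,20} J_{3,20}^3 J_{5,20}^2 J_{7,20}^3 J_{8,20}^2 J_{9,20}^2} + \sum_{n=-\infty}^{\infty} \frac{(-1)^n q^{10n^2+15n+4}}{1+q^{10n+6}}, \] where each summand is expanded as a power series in $q$ (for terms where $m=10n+6<0$, one writes $\frac{1}{1+q^{m}} = \frac{q^{-m}}{1+q^{-m}}$). Then every coefficient of $q^N$, $N\ge 0$, in $K(q)$ is strictly positive.
   Context: Notation: $(a;q)_\infty = \prod_{i\ge 0}(1-aq^i)$ and $(a_1,\dots,a_k;q)_\infty = (a_1;q)_\infty\cdots(a_k;q)_\infty$. For positive integers $a<b$: $J_b = (q^b;q^b)_\infty$ and $J_{a,b} = (q^a, q^{b-a}, q^b; q^b)_\infty$. *)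

(* Defs.v *)
(* Formal power series in q with integer coefficients are
   handled through their truncations: the coefficient of q^N of a series is
   computed from {poly int} representatives that agree with the series up to
   degree N. *)
From HB Require Import structures.
From mathcomp Require Import all_boot all_order all_algebra.
Set Implicit Arguments. Unset Strict Implicit. Unset Printing Implicit Defensive.
Import Order.TTheory GRing.Theory Num.Theory.
Local Open Scope ring_scope.

(* (q^b;q^b)_oo = prod_{i>=0} (1 - q^(b(i+1))), truncated to the factors that
   can affect coefficients of degree <= N (factors i >= N+1 are 1 mod q^(N+1)). *)
Definition Jpoly (N b : nat) : {poly int} :=
  \prod_(i < N.+1) (1 - 'X^(b * i.+1)).

(* J_{a,b} = (q^a, q^(b-a), q^b; q^b)_oo, truncated likewise (0 < a < b). *)
Definition Jabpoly (N a b : nat) : {poly int} :=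
  \prod_(i < N.+1)
     ((1 - 'X^(a + b * i)) * (1 - 'X^((b - a) + b * i)) * (1 - 'X^(b + b * i))).

(* Inverse modulo q^(N+1) of a series p with constant term 1:
   1/p = sum_{k>=0} (1 - p)^k, and (1-p)^k = 0 mod q^(N+1) for k > N. *)
Definition inv_trunc (N : nat) (p : {poly int}) : {poly int} :=
  \sum_(k < N.+1) (1 - p) ^+ k.

Definition sum_term (N : nat) (n : int) : {poly int} :=
  let e : int := 10 * n ^+ 2 + 15 * n + 4 in
  let m : int := 10 * n + 6 in
  (-1) ^+ (absz n) *
  (if 0 < m then 'X^(absz e) * inv_trunc N (1 + 'X^(absz m))
   else 'X^(absz (e - m)) * inv_trunc N (1 + 'X^(absz m))).

(* Only the summands with -(N+1) <= n <= N can contribute to degrees <= N. *)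
Definition Ksum (N : nat) : {poly int} :=
  \sum_(i < (N.+1).*2) sum_term N (i%:Z - (N.+1)%:Z).

Definition Kprod (N : nat) : {poly int} :=
  2%:R * Jpoly N 20 ^+ 15 * Jabpoly N 6 20 * Jabpoly N 10 20 *
  inv_trunc N (Jabpoly N 1 20 ^+ 2 * Jabpoly N 2 20 * Jabpoly N 3 20 ^+ 3 *
               Jabpoly N 5 20 ^+ 2 * Jabpoly N 7 20 ^+ 3 * Jabpoly N 8 20 ^+ 2 *
               Jabpoly N 9 20 ^+ 2).

Definition Kcoef (N : nat) : int := (Kprod N + Ksum N)`_N.

(* Main.v *)
Require Import Defs.
From HB Require Import structures.
From mathcomp Require Import all_boot all_order all_algebra.
From mathcomp Require Import zify ring lra.
Import Order.TTheory GRing.Theory Num.Theory.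
Local Open Scope ring_scope.

Definition eqN (N : nat) (p q : {poly int}) := forall k, (k <= N)%N -> p`_k = q`_k.

Lemma eqN_refl N p : eqN N p p. Proof. by []. Qed.
Lemma eqN_sym N p q : eqN N p q -> eqN N q p. Proof. by move=> h k hk; rewrite h. Qed.
Lemma eqN_trans N p q r : eqN N p q -> eqN N q r -> eqN N p r.
Proof. by move=> h1 h2 k hk; rewrite h1 // h2. Qed.
Lemma eqN_add N p q p' q' : eqN N p p' -> eqN N q q' -> eqN N (p + q) (p' + q').
Proof. by move=> h1 h2 k hk; rewrite !coefD h1 // h2. Qed.
Lemma eqN_mul N p q p' q' : eqN N p p' -> eqN N q q' -> eqN N (p * q) (p' * q').
Proof.
move=> h1 h2 k hk; rewrite !coefM; apply: eq_bigr => j _.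
have hj : (j <= k)%N by rewrite -ltnS ltn_ord.
rewrite h1; last exact: leq_trans hj hk.
rewrite h2 //; exact: leq_trans (leq_subr _ _) hk.
Qed.
Arguments eqN_trans {N p q r}. Arguments eqN_add {N p q p' q'}. Arguments eqN_mul {N p q p' q'}. Arguments eqN_sym {N p q}.
Lemma eqN_eq N p q : p = q -> eqN N p q. Proof. by move->. Qed.

Lemma eqN_prod N n (f g : nat -> {poly int}) :
  (forall i, (i < n)%N -> eqN N (f i) (g i)) ->
  eqN N (\prod_(i < n) f i) (\prod_(i < n) g i).
Proof.
elim: n => [|n IH] h; first by rewrite !big_ord0.
rewrite !big_ord_recr /=; apply: eqN_mul; last exact: h.
by apply: IH => i hi; apply: h; rewrite ltnS ltnW.
Qed.

Lemma eqN_prod1 N n (f : nat -> {poly int}) :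
  (forall i, (i < n)%N -> eqN N (f i) 1) -> eqN N (\prod_(i < n) f i) 1.
Proof.
move=> h; apply: eqN_trans (eqN_prod N n f (fun=> 1) h) _; rewrite big1 //.
Qed.

Definition c (k : nat) : {poly int} := 1 - 'X^k.

Lemma c_big N k : (N < k)%N -> eqN N (c k) 1.
Proof.
move=> hk j hj; rewrite /c coefB coefXn coefC.
have -> : (j == k) = false by apply/negbTE; rewrite neq_ltn (leq_ltn_trans hj hk).
by rewrite subr0.
Qed.

Lemma geom (u : {poly int}) n : (1 - u) * \sum_(k < n) u ^+ k = 1 - u ^+ n.
Proof.
elim: n => [|n IH]; first by rewrite big_ord0 expr0 mulr0 subrr.
rewrite big_ord_recr /= mulrDr IH exprS; ring.
Qed.

Lemma pow_small (u : {poly int}) n k : u`_0 = 0 -> (k < n)%N -> (u ^+ n)`_k = 0.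
Proof.
move=> u0; elim: n k => [|n IH] k //= hk.
rewrite exprS coefM; apply: big1 => j _.
case: (posnP j) => [->|jp]; first by rewrite u0 mul0r.
rewrite IH ?mulr0 //.
have := ltn_ord j; lia.
Qed.

Lemma inv_truncP N (p : {poly int}) : p`_0 = 1 -> eqN N (p * inv_trunc N p) 1.
Proof.
move=> p0; rewrite /inv_trunc.
set u := 1 - p.
have -> : p = 1 - u by rewrite /u; ring.
rewrite geom => k hk.
rewrite coefB pow_small ?subr0 //.
by rewrite /u coefB p0 coefC subrr.
Qed.

Definition G (N a : nat) : {poly int} := \sum_(j < N.+1) ('X^a) ^+ j.
Definition R (N a b : nat) : {poly int} := G N a + 'X^b * G N b.

Lemma G_c N a : (0 < a)%N -> eqN N (G N a * c a) 1.
Proof.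
move=> a0; rewrite mulrC /c /G geom -exprM => k hk.
rewrite coefB coefXn coefC.
have -> : (k == (a * N.+1)%N) = false.
  by apply/negbTE; rewrite neq_ltn; apply/orP; left; nia.
by rewrite subr0.
Qed.

Lemma R_cc N a b k : (0 < a)%N -> (0 < b)%N -> k = (a + b)%N ->
  eqN N (R N a b * c a * c b) (c k).
Proof.
move=> a0 b0 ->.
have e : R N a b * c a * c b = (G N a * c a) * c b + 'X^b * (G N b * c b) * c a.
  rewrite /R; ring.
rewrite e; apply: eqN_trans (eqN_add (eqN_mul (G_c N a a0) (eqN_refl N (c b)))
   (eqN_mul (eqN_mul (eqN_refl N 'X^b) (G_c N b b0)) (eqN_refl N (c a)))) _.
apply: eqN_eq; rewrite /c exprD; ring.
Qed.

Lemma one_c N a k : k = (a + a)%N -> eqN N ((1 + 'X^a) * c a) (c k).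
Proof. by move=> ->; apply: eqN_eq; rewrite /c exprD; ring. Qed.

Definition nonneg (p : {poly int}) := forall k, 0 <= p`_k.
Definition good (p : {poly int}) := nonneg p /\ p`_0 = 1.

Lemma nonneg_mul p q : nonneg p -> nonneg q -> nonneg (p * q).
Proof. by move=> hp hq k; rewrite coefM; apply: sumr_ge0 => j _; apply: mulr_ge0. Qed.
Lemma good_mul p q : good p -> good q -> good (p * q).
Proof. by move=> [hp p0] [hq q0]; split; [apply: nonneg_mul | rewrite coef0M p0 q0 mulr1]. Qed.
Lemma good_prod n (f : nat -> {poly int}) : (forall i, (i < n)%N -> good (f i)) -> good (\prod_(i < n) f i).
Proof.
elim: n => [|n IH] h.
  by rewrite big_ord0; split => [k|]; rewrite coefC //; case: (k == 0)%N.
rewrite big_ord_recr /=; apply: good_mul; last exact: h.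
by apply: IH => i hi; apply: h; rewrite ltnS ltnW.
Qed.
Lemma good_add p q : good p -> nonneg q -> q`_0 = 0 -> good (p + q).
Proof. by move=> [hp p0] hq q0; split => [k|]; rewrite coefD ?addr_ge0 // p0 q0 addr0. Qed.

Lemma coef_ge_l p q k : good p -> good q -> p`_k <= (p * q)`_k.
Proof.
move=> [hp p0] [hq q0]; rewrite coefM big_ord_recr /= subnn q0 mulr1 lerDr.
by apply: sumr_ge0 => j _; apply: mulr_ge0.
Qed.
Lemma coef_ge_r p q k : good p -> good q -> q`_k <= (p * q)`_k.
Proof. by move=> hp hq; rewrite mulrC; apply: coef_ge_l. Qed.

Lemma coefG N a k : (G N a)`_k = \sum_(j < N.+1) ((k == a * j)%N)%:R.
Proof. by rewrite /G coef_sum; apply: eq_bigr => j _; rewrite -exprM coefXn. Qed.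

Lemma good_G N a : (0 < a)%N -> good (G N a).
Proof.
move=> a0; split => [k|]; rewrite coefG.
  by apply: sumr_ge0 => j _; case: (_ == _).
rewrite big_ord_recl /= muln0 eqxx big1 ?addr0 // => j _.
by rewrite /bump /=; case: eqP => //; nia.
Qed.

Lemma good_1X a : (0 < a)%N -> good (1 + 'X^a).
Proof.
move=> a0; apply: good_add.
- by split => [k|]; rewrite coefC //; case: (k == 0)%N.
- by move=> k; rewrite coefXn; case: (_ == _).
- by rewrite coefXn; case: eqP => //; lia.
Qed.

Lemma good_R N a b : (0 < a)%N -> (0 < b)%N -> good (R N a b).
Proof.
move=> a0 b0; apply: good_add; first exact: good_G.
- by apply: nonneg_mul; [move=> k; rewrite coefXn; case: (_ == _) | case: (good_G N b b0)].
- by rewrite coefXnM b0.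
Qed.

Lemma coefG1 N k : (k <= N)%N -> (G N 1)`_k = 1.
Proof.
move=> hk; rewrite coefG.
have hk' : (k < N.+1)%N by [].
rewrite (bigD1 (Ordinal hk')) //= big1 ?addr0; first by case: eqP => //; lia.
move=> j hj.
case: eqP => // e; move: hj; rewrite -val_eqE /= => /eqP; lia.
Qed.

Lemma coefG1sq N : ((G N 1) ^+ 2)`_N = (N.+1)%:R.
Proof.
rewrite expr2 coefM (eq_bigr (fun=> 1)); last first.
  by move=> j _; have hj := ltn_ord j; rewrite !coefG1 ?mulr1 //; lia.
by rewrite sumr_const card_ord.
Qed.

Lemma powX M k t : `|((- ('X^M : {poly int})) ^+ k)`_t| = ((t == M * k)%N)%:R.
Proof.
elim: k t => [|k IH] t.
  by rewrite expr0 coefC muln0; case: (t == 0)%N.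
rewrite exprS mulNr coefN normrN coefXnM.
case: ltnP => h.
  by case: eqP => //; nia.
rewrite IH; congr (_ %:R); apply/eqP/eqP; nia.
Qed.

Lemma geomX M n : (0 < M)%N ->
  (forall t, `|(\sum_(k < n) (- ('X^M : {poly int})) ^+ k)`_t| <= 1) /\
  (forall t, (M * n <= t)%N -> (\sum_(k < n) (- ('X^M : {poly int})) ^+ k)`_t = 0).
Proof.
move=> M0; elim: n => [|n [IH1 IH2]].
  by split => t; rewrite big_ord0 coef0 // normr0.
have zero : forall t, (t != M * n)%N -> ((- ('X^M : {poly int})) ^+ n)`_t = 0.
  move=> t ht; apply/eqP; rewrite -normr_eq0 powX.
  by move/negbTE: ht => ->.
split => t; rewrite big_ord_recr /= coefD.
  case: (eqVneq t (M * n)%N) => ht.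
    by rewrite ht IH2 // add0r powX eqxx.
  by rewrite zero // addr0.
move=> ht; rewrite IH2 ?zero ?addr0 //; [apply/eqP|]; nia.
Qed.

Lemma inv_1X_coef N M t : (0 < M)%N -> `|(inv_trunc N (1 + 'X^M))`_t| <= 1.
Proof.
move=> M0; rewrite /inv_trunc.
have -> : 1 - (1 + ('X^M : {poly int})) = - 'X^M by ring.
by case: (geomX M N.+1 M0) => h _; apply: h.
Qed.

Lemma termX_coef N E M : (0 < M)%N ->
  `|('X^E * inv_trunc N (1 + 'X^M))`_N| <= 1.
Proof. by move=> M0; rewrite coefXnM; case: ifP => _; [rewrite normr0 | apply: inv_1X_coef]. Qed.

Lemma sum_term_coef N n : `|(sum_term N n)`_N| <= 1.
Proof.
rewrite /sum_term -signr_odd mulr_sign.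
have M0 : (0 < absz (10 * n + 6)%R)%N by rewrite absz_gt0; lia.
by case: odd; rewrite ?coefN ?normrN; case: ifP => _; apply: termX_coef.
Qed.

Lemma sum_term0 N : (sum_term N (0%:Z - (N.+1)%:Z))`_N = 0.
Proof.
rewrite /sum_term.
set n := (0%:Z - (N.+1)%:Z).
have -> : (0 < 10 * n + 6) = false by apply/negbTE; rewrite /n; lia.
set x := (10 * n ^+ 2 + 15 * n + 4 - (10 * n + 6)).
have hx : (N < absz x)%N.
  have hx0 : N%:Z < x by rewrite /x /n expr2; nia.
  have : (N%:Z < (absz x)%:Z) by rewrite abszE ger0_norm //; lia.
  by rewrite ltz_nat.
rewrite -signr_odd mulr_sign; case: odd; rewrite ?coefN coefXnM hx //.
Qed.

Lemma Ksum_bound N : `|(Ksum N)`_N| <= (N.*2.+1)%:R.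
Proof.
rewrite /Ksum coef_sum; apply: le_trans (ler_norm_sum _ _ _) _.
rewrite doubleS big_ord_recl /= sum_term0 normr0 add0r.
apply: le_trans (_ : \sum_(i < N.*2.+1) (1 : int) <= _).
  by apply: ler_sum => i _; apply: sum_term_coef.
by rewrite sumr_const card_ord.
Qed.

Definition n2 (i : nat) : {poly int} :=
  c (20 + 20 * i) ^+ 2 * c (6 + 20 * i) * c (14 + 20 * i) * c (10 + 20 * i) ^+ 2.
Definition d2 (i : nat) : {poly int} :=
  c (1 + 20 * i) ^+ 2 * c (19 + 20 * i) ^+ 2 * c (2 + 20 * i) * c (18 + 20 * i) *
  c (3 + 20 * i) ^+ 3 * c (17 + 20 * i) ^+ 3 * c (5 + 20 * i) ^+ 2 * c (15 + 20 * i) ^+ 2 *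
  c (7 + 20 * i) ^+ 3 * c (13 + 20 * i) ^+ 3 * c (8 + 20 * i) ^+ 2 * c (12 + 20 * i) ^+ 2 *
  c (9 + 20 * i) ^+ 2 * c (11 + 20 * i) ^+ 2.
Definition CC (N : nat) := \prod_(i < N.+1) c (20 + 20 * i) ^+ 15.
Definition Num2 (N : nat) := 2%:R * \prod_(i < N.+1) n2 i.
Definition D2 (N : nat) := \prod_(i < N.+1) d2 i.
Definition Den (N : nat) : {poly int} :=
  Jabpoly N 1 20 ^+ 2 * Jabpoly N 2 20 * Jabpoly N 3 20 ^+ 3 *
  Jabpoly N 5 20 ^+ 2 * Jabpoly N 7 20 ^+ 3 * Jabpoly N 8 20 ^+ 2 *
  Jabpoly N 9 20 ^+ 2.

Lemma jab_form N a : Jabpoly N a 20 =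
  \prod_(i < N.+1) (c (a + 20 * i) * c ((20 - a) + 20 * i) * c (20 + 20 * i)).
Proof. by []. Qed.

Lemma E1 N : 2%:R * Jpoly N 20 ^+ 15 * Jabpoly N 6 20 * Jabpoly N 10 20 = CC N * Num2 N.
Proof.
rewrite !jab_form [(20 - 6)%N]/= [(20 - 10)%N]/= /Jpoly.
rewrite -prodrXl /CC /Num2.
have -> : \prod_(i < N.+1) n2 i =
   \prod_(i < N.+1) (c (6 + 20 * i) * c (14 + 20 * i) * c (20 + 20 * i)) *
   \prod_(i < N.+1) (c (10 + 20 * i) * c (10 + 20 * i) * c (20 + 20 * i)).
  by rewrite -big_split /=; apply: eq_bigr => i _; rewrite /n2; ring.
have -> : \prod_(i < N.+1) (1 - 'X^(20 * i.+1)) ^+ 15 = \prod_(i < N.+1) c (20 + 20 * i) ^+ 15.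
  by apply: eq_bigr => i _; rewrite mulnS.
ring.
Qed.

Lemma E2 N : Den N = CC N * D2 N.
Proof.
rewrite /Den !jab_form [(20 - 1)%N]/= [(20 - 2)%N]/= [(20 - 3)%N]/= [(20 - 5)%N]/=
  [(20 - 7)%N]/= [(20 - 8)%N]/= [(20 - 9)%N]/=.
rewrite -!prodrXl /CC /D2 -!big_split /=; apply: eq_bigr => i _; rewrite /d2; ring.
Qed.

Definition fG N m := G N (1 + 20 * m) ^+ 2.
Definition fr N m : {poly int} :=
  (1 + 'X^(3 + 20 * m)) * (1 + 'X^(13 + 20 * m)) * (1 + 'X^(7 + 20 * m)) *
  (1 + 'X^(17 + 20 * m)) * (1 + 'X^(5 + 20 * m)) ^+ 2 * (1 + 'X^(15 + 20 * m)) ^+ 2 *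
  R N (9 + 20 * m) (11 + 20 * m) * R N (9 + 20 * m) (31 + 20 * m) *
  R N (3 + 20 * m) (17 + 20 * m) * R N (3 + 20 * m) (37 + 20 * m) *
  G N (19 + 20 * m) ^+ 2 * G N (2 + 20 * m) * G N (18 + 20 * m) *
  G N (7 + 20 * m) ^+ 2 * G N (13 + 20 * m) ^+ 2 * G N (8 + 20 * m) ^+ 2 *
  G N (12 + 20 * m) ^+ 2.
Definition f N m := fG N m * fr N m.
Definition e (i : nat) : {poly int} :=
  c (1 + 20 * i) ^+ 2 * c (19 + 20 * i) ^+ 2 * c (2 + 20 * i) * c (18 + 20 * i) *
  c (3 + 20 * i) ^+ 3 * c (17 + 20 * i) ^+ 2 * c (5 + 20 * i) ^+ 2 * c (15 + 20 * i) ^+ 2 *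
  c (7 + 20 * i) ^+ 3 * c (13 + 20 * i) ^+ 3 * c (8 + 20 * i) ^+ 2 * c (12 + 20 * i) ^+ 2 *
  c (9 + 20 * i) ^+ 2 * c (11 + 20 * i).
Definition s (i : nat) : {poly int} := c (17 + 20 * i) * c (11 + 20 * i).
Definition d2' (i : nat) : {poly int} := e i * (c (37 + 20 * i) * c (31 + 20 * i)).

Ltac blk := first [ apply: one_c; lia | apply: R_cc; lia | apply: G_c; lia ].

Lemma level N m : eqN N (f N m * d2' m) (n2 (m.*2) * n2 (m.*2).+1).
Proof.
set M := m.*2.
have -> : f N m * d2' m =
  ((1 + 'X^(3 + 20 * m)) * c (3 + 20 * m)) *
  ((1 + 'X^(13 + 20 * m)) * c (13 + 20 * m)) *
  ((1 + 'X^(7 + 20 * m)) * c (7 + 20 * m)) *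
  ((1 + 'X^(17 + 20 * m)) * c (17 + 20 * m)) *
  ((1 + 'X^(5 + 20 * m)) * c (5 + 20 * m)) *
  ((1 + 'X^(5 + 20 * m)) * c (5 + 20 * m)) *
  ((1 + 'X^(15 + 20 * m)) * c (15 + 20 * m)) *
  ((1 + 'X^(15 + 20 * m)) * c (15 + 20 * m)) *
  (R N (9 + 20 * m) (11 + 20 * m) * c (9 + 20 * m) * c (11 + 20 * m)) *
  (R N (9 + 20 * m) (31 + 20 * m) * c (9 + 20 * m) * c (31 + 20 * m)) *
  (R N (3 + 20 * m) (17 + 20 * m) * c (3 + 20 * m) * c (17 + 20 * m)) *
  (R N (3 + 20 * m) (37 + 20 * m) * c (3 + 20 * m) * c (37 + 20 * m)) *
  (G N (1 + 20 * m) * c (1 + 20 * m)) * (G N (1 + 20 * m) * c (1 + 20 * m)) *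
  (G N (19 + 20 * m) * c (19 + 20 * m)) * (G N (19 + 20 * m) * c (19 + 20 * m)) *
  (G N (2 + 20 * m) * c (2 + 20 * m)) * (G N (18 + 20 * m) * c (18 + 20 * m)) *
  (G N (7 + 20 * m) * c (7 + 20 * m)) * (G N (7 + 20 * m) * c (7 + 20 * m)) *
  (G N (13 + 20 * m) * c (13 + 20 * m)) * (G N (13 + 20 * m) * c (13 + 20 * m)) *
  (G N (8 + 20 * m) * c (8 + 20 * m)) * (G N (8 + 20 * m) * c (8 + 20 * m)) *
  (G N (12 + 20 * m) * c (12 + 20 * m)) * (G N (12 + 20 * m) * c (12 + 20 * m)).
  by rewrite /f /fG /fr /d2' /e; ring.
have -> : n2 M * n2 M.+1 =
  c (6 + 20 * M) * c (6 + 20 * M.+1) * c (14 + 20 * M) * c (14 + 20 * M.+1) *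
  c (10 + 20 * M) * c (10 + 20 * M) * c (10 + 20 * M.+1) * c (10 + 20 * M.+1) *
  c (20 + 20 * M) * c (20 + 20 * M.+1) * c (20 + 20 * M) * c (20 + 20 * M.+1) *
  1 * 1 * 1 * 1 * 1 * 1 * 1 * 1 * 1 * 1 * 1 * 1 * 1 * 1.
  by rewrite /n2; ring.
rewrite /M.
by repeat (apply: eqN_mul; last by blk); blk.
Qed.

Lemma c_pow_big N k n : (N < k)%N -> eqN N (c k ^+ n) 1.
Proof.
move=> hk; elim: n => [|n IH]; first by rewrite expr0.
rewrite exprS; apply: eqN_trans (eqN_mul (c_big N k hk) IH) _; rewrite mulr1.
exact: eqN_refl.
Qed.

Lemma eqN_mul1 N p q : eqN N p 1 -> eqN N q 1 -> eqN N (p * q) 1.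
Proof. move=> h1 h2; apply: eqN_trans (eqN_mul h1 h2) _; rewrite mulr1; exact: eqN_refl. Qed.

Lemma pair_prod (g : nat -> {poly int}) L :
  \prod_(i < L.*2) g i = \prod_(m < L) (g m.*2 * g m.*2.+1).
Proof.
elim: L => [|L IH]; first by rewrite !big_ord0.
by rewrite doubleS !big_ord_recr /= IH mulrA.
Qed.

Lemma extend N L k (g : nat -> {poly int}) :
  (forall i, (L <= i)%N -> eqN N (g i) 1) ->
  eqN N (\prod_(i < L) g i) (\prod_(i < L + k) g i).
Proof.
move=> h; elim: k => [|k IH]; first by rewrite addn0; exact: eqN_refl.
rewrite addnS big_ord_recr /=.
apply: eqN_trans IH _; apply: eqN_sym.
apply: eqN_trans (eqN_mul (eqN_refl N _) (h _ (leq_addr _ _))) _.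
rewrite mulr1; exact: eqN_refl.
Qed.

Lemma D2_shift N : eqN N (D2 N) (s 0 * \prod_(m < N.+1) d2' m).
Proof.
have hs : eqN N (\prod_(m < N.+1) s m) (s 0 * \prod_(m < N.+1) s m.+1).
  have h1 : eqN N (\prod_(m < N.+1) s m) (\prod_(m < N.+1 + 1) s m).
    apply: extend => i hi; rewrite /s.
    apply: eqN_trans (eqN_mul (c_big N _ _) (c_big N _ _)) _; try lia.
    rewrite mulr1; exact: eqN_refl.
  apply: eqN_trans h1 _; rewrite addn1 big_ord_recl /=.
  apply: eqN_eq; congr (_ * _); apply: eq_bigr => i _; by rewrite lift0.
have -> : D2 N = \prod_(m < N.+1) e m * \prod_(m < N.+1) s m.
  by rewrite /D2 -big_split /=; apply: eq_bigr => i _; rewrite /d2 /e /s; ring.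
apply: eqN_trans (eqN_mul (eqN_refl N _) hs) _.
apply: eqN_eq.
have -> : \prod_(m < N.+1) d2' m = \prod_(m < N.+1) e m * \prod_(m < N.+1) s m.+1.
  rewrite -big_split /=; apply: eq_bigr => i _; rewrite /d2' /s.
  have -> : (17 + 20 * i.+1 = 37 + 20 * i)%N by lia.
  have -> : (11 + 20 * i.+1 = 31 + 20 * i)%N by lia.
  by [].
ring.
Qed.

Definition F N := 2%:R * (G N 17 * G N 11) * \prod_(m < N.+1) f N m.

Lemma E3 N : eqN N (F N * D2 N) (Num2 N).
Proof.
apply: eqN_trans (eqN_mul (eqN_refl N (F N)) (D2_shift N)) _.
have -> : F N * (s 0 * \prod_(m < N.+1) d2' m) =
  2%:R * ((G N 17 * c 17) * (G N 11 * c 11)) * \prod_(m < N.+1) (f N m * d2' m).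
  have -> : \prod_(m < N.+1) (f N m * d2' m) = \prod_(m < N.+1) f N m * \prod_(m < N.+1) d2' m.
    by rewrite big_split.
  rewrite /F /s muln0 !addn0; ring.
apply: eqN_trans (eqN_mul (eqN_mul (eqN_refl N 2%:R)
   (eqN_mul (G_c N 17 isT) (G_c N 11 isT))) (eqN_prod N N.+1 _ _ (fun m _ => level N m))) _.
rewrite !mulr1 -pair_prod /Num2 -addnn.
apply: eqN_mul; first exact: eqN_refl.
apply: eqN_sym; apply: extend => i hi; rewrite /n2.
by repeat apply: eqN_mul1; first [apply: c_pow_big | apply: c_big]; lia.
Qed.

Lemma one0_mul (p q : {poly int}) : p`_0 = 1 -> q`_0 = 1 -> (p * q)`_0 = 1.
Proof. by move=> h1 h2; rewrite coef0M h1 h2 mulr1. Qed.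
Lemma one0_exp (p : {poly int}) n : p`_0 = 1 -> (p ^+ n)`_0 = 1.
Proof.
move=> h; elim: n => [|n IH]; first by rewrite expr0 coefC.
by rewrite exprS one0_mul.
Qed.
Lemma one0_prod n (g : 'I_n -> {poly int}) : (forall i, (g i)`_0 = 1) ->
  (\prod_(i < n) g i)`_0 = 1.
Proof.
move=> h; apply: (big_ind (fun p : {poly int} => p`_0 = 1)) => //.
  by rewrite coefC.
by move=> x y; apply: one0_mul.
Qed.
Lemma good_prodo n (g : 'I_n -> {poly int}) : (forall i, good (g i)) ->
  good (\prod_(i < n) g i).
Proof.
move=> h; apply: (big_ind good) => //.
  by split => [k|]; rewrite coefC //; case: (k == 0)%N.
by move=> x y; apply: good_mul.
Qed.
Lemma c0 k : (0 < k)%N -> (c k)`_0 = 1.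
Proof. by move=> hk; rewrite /c coefB coefC coefXn; case: eqP => //; lia. Qed.

Lemma Den0 N : (Den N)`_0 = 1.
Proof.
rewrite E2 /CC /D2; apply: one0_mul; apply: one0_prod => i.
  by apply: one0_exp; apply: c0; lia.
by rewrite /d2; repeat (apply: one0_mul || apply: one0_exp); apply: c0; lia.
Qed.

Lemma Kprod_F N : eqN N (Kprod N) (F N).
Proof.
rewrite /Kprod -/(Den N) E1.
apply: eqN_trans (eqN_mul (eqN_mul (eqN_refl N (CC N)) (eqN_sym (E3 N))) (eqN_refl N _)) _.
have -> : CC N * (F N * D2 N) * inv_trunc N (Den N) = F N * (Den N * inv_trunc N (Den N)).
  by rewrite E2; ring.
apply: eqN_trans (eqN_mul (eqN_refl N (F N)) (inv_truncP N _ (Den0 N))) _.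
rewrite mulr1; exact: eqN_refl.
Qed.

Ltac goodtac := repeat first [apply: good_mul | apply: good_R; lia | apply: good_G; lia
  | apply: good_1X; lia | rewrite expr2].

Lemma F_bound N : (N.+1)%:R *+ 2 <= (F N)`_N.
Proof.
rewrite /F -mulrA mulr_natl coefMn lerMn2r /=.
have gf : forall m, good (f N m) by move=> m; rewrite /f /fG /fr; goodtac.
have gG : good (G N 17 * G N 11) by goodtac.
apply: le_trans (coef_ge_r _ _ _ gG _); last by apply: good_prodo => i; apply: gf.
rewrite big_ord_recl.
apply: le_trans (coef_ge_l _ _ _ (gf _) _); last by apply: good_prodo => i; apply: gf.
rewrite /f; apply: le_trans (coef_ge_l _ _ _ _ _).
- by rewrite /fG muln0 addn0 coefG1sq.
- by rewrite /fG; goodtac.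
- by rewrite /fr; goodtac.
Qed.

Theorem mainTheorem8 (N : nat) : 0 < Kcoef N.
Proof.
rewrite /Kcoef coefD (Kprod_F N N (leqnn N)).
have hF := F_bound N.
have := Ksum_bound N; rewrite ler_norml => /andP [h1 _].
move: hF h1; rewrite !natz mulr2n; lia.
Qed.
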